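(* Let $A=(a_{ij})$ be a real $n\times n$ matrix with nonnegative entries, $\mathbf 1=(1,\ldots,1)^{\mathrm T}$, and $L=\operatorname{diag}(A\mathbf 1)-A$, and assume that $0$ is an eigenvalue of $L$ of algebraic multiplicity at least $2$. Let $S$ be the orthogonal projection of $\mathbb R^n$ onto $\mathcal R(L)\oplus\operatorname{span}(\mathbf 1)$ and, for $\tau>0$, let $\widetilde L(\tau)=\tau^{-1}(I-S)+LS$. Then $\|\widetilde L(\tau)-L\|_E$ decreases as $\tau>0$ increases, and its infimum over $\tau>0$ is $\|LS-L\|_E$. Moreover, over the range $0<\tau\le\bigl(\max_i\sum_{j\neq i}a_{ij}\bigr)^{-1}$, the smallest value of $\|\widetilde L(\tau)-L\|_E$ is attained at $\tau=\bigl(\max_i\sum_{j\neq i}a_{ij}\bigr)^{-1}$.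
   Context: $\|X\|_E$ denotes the Euclidean (Frobenius) norm $\sqrt{\operatorname{trace}(XX^{\mathrm T})}$. $\mathcal R(L)$ is the range of $L$. The condition $0<\tau\le(\max_i\sum_{j\ne i}a_{ij})^{-1}$ is the condition for $I-\tau L$ to be row stochastic. *)

(* Defs.v *)
From HB Require Import structures.
From mathcomp Require Import all_boot all_order all_algebra.
From mathcomp Require Import classical_sets reals.
Set Implicit Arguments. Unset Strict Implicit. Unset Printing Implicit Defensive.
Import Order.TTheory GRing.Theory Num.Theory.
Local Open Scope ring_scope.

Definition frob_norm {R : realType} {m n : nat} (X : 'M[R]_(m, n)) : R :=
  Num.sqrt (\tr (X *m X^T)).

Definition laplacian {R : realType} {n : nat} (A : 'M[R]_n) : 'M[R]_n :=
  diag_mx (A *m const_mx 1)^T - A.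

(* Subspace R(L) + span(1), represented (MathComp row-space convention) by the
   row space of the matrix whose rows span it: the columns of L (rows of L^T)
   together with the all-ones vector. *)
Definition range_plus_ones {R : realType} {n : nat} (L : 'M[R]_n) : 'M[R]_(n + 1, n) :=
  col_mx L^T (const_mx 1).

(* S is the orthogonal projection of R^n onto the subspace spanned by the rows of U:
   symmetric, idempotent, with range (= row space, S being symmetric) equal to U. *)
Definition is_orth_proj {R : realType} {n m : nat} (S : 'M[R]_n) (U : 'M[R]_(m, n)) : Prop :=
  S^T = S /\ S *m S = S /\ (S == U)%MS.

Definition Ltilde {R : realType} {n : nat} (L S : 'M[R]_n) (tau : R) : 'M[R]_n :=
  tau^-1 *: (1%:M - S) + L *m S.

Definition max_offdiag_rowsum {R : realType} {n : nat} (A : 'M[R]_n) : R :=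
  \big[Num.max/0]_(i < n) \sum_(j < n | j != i) A i j.

(* Main.v *)
Require Import Defs.
From HB Require Import structures.
From mathcomp Require Import all_boot all_order all_algebra.
From mathcomp Require Import classical_sets reals.
From mathcomp Require Import lra.
Import Order.TTheory GRing.Theory Num.Theory.
Local Open Scope ring_scope.
Set Implicit Arguments. Unset Strict Implicit.


Section K1.
Variables (R : comNzRingType) (n : nat) (L : 'M[R]_n).
Hypothesis L1 : L *m (const_mx 1 : 'cV[R]_n) = 0.

Lemma det_identity :
  'X * char_poly (L + const_mx 1) = ('X - n%:R%:P) * char_poly L.
Proof.
pose E := char_poly_mx L.
pose u : 'cV[{poly R}]_n := const_mx 1.
pose v : 'rV[{poly R}]_n := const_mx 1.
have Eu : E *m u = 'X *: u.
  rewrite /E /char_poly_mx mulmxBl mul_scalar_mx.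
  have -> : map_mx polyC L *m u = map_mx polyC (L *m const_mx 1).
    by rewrite map_mxM; congr (_ *m _); apply/matrixP => i j; rewrite !mxE.
  by rewrite L1 map_mx0 subr0.
have uv : u *m v = const_mx 1.
  by apply/matrixP => i j; rewrite !mxE big_ord1 !mxE mulr1.
have vu : v *m u = (n%:R)%:M.
  apply/matrixP => i j; rewrite !ord1 !mxE /= mulr1n.
  under eq_bigr do rewrite !mxE mulr1.
  by rewrite sumr_const card_ord.
have EK : E - u *m v = char_poly_mx (L + const_mx 1).
  rewrite uv /E /char_poly_mx map_mxD opprD addrA; congr (_ - _).
  by apply/matrixP => i j; rewrite !mxE.
pose M := block_mx (1%:M : 'M_1) v u E.
have M1 : M = block_mx 1%:M 0 u 1%:M *m block_mx 1%:M v 0 (E - u *m v).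
  rewrite mulmx_block !mul1mx !mulmx1 !mul0mx !addr0 ?add0r.

  by rewrite addrC subrK.
have detM : \det M = char_poly (L + const_mx 1).
  by rewrite M1 det_mulmx det_lblock det_ublock !det1 !mul1r EK.
pose N := block_mx ('X%:M : 'M_1) 0 (- u) 1%:M.
have detN : \det N = 'X by rewrite det_lblock det1 mulr1 det_scalar1.
have MN : M *m N = block_mx ('X%:M - v *m u) v 0 E.
  rewrite mulmx_block !mul1mx !mulmx1 !mulmx0 ?add0r ?addr0 !mulmxN.

  by rewrite mul_mx_scalar Eu subrr.
have := congr1 determinant MN.
rewrite det_mulmx detM detN det_ublock vu det_mx11 !mxE eqxx /= mulr1n.
by rewrite mulrC => ->; rewrite -mulNrn -polyCMn mulrC /polyC /=.
Qed.
End K1.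


Section R2.
Variables (R : realType) (n : nat).

Lemma laplacian1 (A : 'M[R]_n) : laplacian A *m (const_mx 1 : 'cV_n) = 0.
Proof.
rewrite /laplacian mulmxBl mul_diag_mx; apply/matrixP => i j.
by rewrite !mxE mulr1 ord1 subrr.
Qed.

Lemma det_K0 (L : 'M[R]_n) : L *m (const_mx 1 : 'cV_n) = 0 ->
  (1 < mup 0 (char_poly L))%N -> \det (L + const_mx 1) = 0.
Proof.
move=> L1 hm.
have p0 : char_poly L != 0 by apply: monic_neq0; apply: char_poly_monic.
move: hm; rewrite mup_geq // subr0 => /dvdpP [q Hq].
have c0 : (char_poly L)`_0 = 0 by rewrite Hq coefMXn.
have c1 : (char_poly L)`_1 = 0 by rewrite Hq coefMXn.
have := congr1 (fun p : {poly R} => p`_1) (@det_identity _ _ _ L1).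
rewrite /= coefXM /= mulrBl coefB coefXM /= coefCM c0 c1 mulr0 subr0.
rewrite char_poly_det => /eqP; rewrite mulf_eq0 signr_eq0 /=.
by move/eqP.
Qed.
End R2.


Section R3.
Variables (R : realType) (n : nat).

Lemma S_neq1 (L S : 'M[R]_n) : L *m (const_mx 1 : 'cV_n) = 0 ->
  \det (L + const_mx 1) = 0 -> (S == range_plus_ones L)%MS -> S != 1%:M.
Proof.
move=> L1 dK hS; apply/eqP => S1.
have H1 : (1%:M <= range_plus_ones L)%MS by rewrite -S1; case/andP: hS.
have [v vnz vK] : exists2 v : 'rV[R]_n, v != 0 & v *m (L + const_mx 1) = 0.
  by apply/det0P/eqP.
pose c : 'cV[R]_n := const_mx 1.
pose r : 'rV[R]_n := const_mx 1.
have J : (const_mx 1 : 'M[R]_n) = c *m r.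
  by apply/matrixP => i j; rewrite !mxE big_ord1 !mxE mulr1.
have rc : r *m c = (n%:R)%:M.
  apply/matrixP => i j; rewrite !ord1 !mxE /= mulr1n.
  under eq_bigr do rewrite !mxE mulr1.
  by rewrite sumr_const card_ord.
have n0 : n != 0%N.
  apply: contraNneq vnz => n0; apply/eqP/rowP => i.
  by have := ltn_ord i; rewrite {2}n0.
pose s := v *m c.
have e1 : v *m L + s *m r = 0 by rewrite /s -mulmxA -J -mulmxDr.
have s0 : s = 0.
  have := congr1 (mulmx^~ c) e1; rewrite /= mulmxDl -mulmxA L1 mulmx0 add0r.
  rewrite mul0mx -mulmxA rc mul_mx_scalar => /eqP.
  by rewrite scaler_eq0 pnatr_eq0 (negPf n0) /= => /eqP.
have vL : v *m L = 0 by move: e1; rewrite s0 mul0mx addr0.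
have Uv : range_plus_ones L *m v^T = 0.
  rewrite /range_plus_ones mul_col_mx -trmx_mul vL trmx0.
  have -> : (const_mx 1 : 'rV[R]_n) *m v^T = s^T.
    by rewrite /s trmx_mul; congr (_ *m _); apply/matrixP => i j; rewrite !mxE.
  by rewrite s0 trmx0; apply/matrixP => i j; rewrite !mxE; case: split => ?; rewrite mxE.
have [D HD] := submxP H1.
have : v^T = 0 by rewrite -[v^T]mul1mx HD -mulmxA Uv mulmx0.
by move/(congr1 trmx); rewrite trmxK trmx0 => v0; rewrite v0 eqxx in vnz.
Qed.
End R3.


Section R4.
Variables (R : realType) (n : nat).

Lemma tr_expand (P Y : 'M[R]_n) a : \tr (P *m Y^T) = 0 ->
  \tr ((a *: P + Y) *m (a *: P + Y)^T) = a ^+ 2 * \tr (P *m P^T) + \tr (Y *m Y^T).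
Proof.
move=> h; have h' : \tr (Y *m P^T) = 0 by rewrite -mxtrace_tr trmx_mul trmxK.
rewrite linearD linearZ /= mulmxDl mulmxDr mulmxDr -!scalemxAl -!scalemxAr.

rewrite !mxtraceD !mxtraceZ h h' !mulr0 addr0 add0r expr2 mulrA.
by [].
Qed.

Lemma frob_formula (L S : 'M[R]_n) c : S^T = S -> S *m S = S ->
  (1%:M - S) *m L = 0 ->
  \tr ((c *: (1%:M - S) + L *m S - L) *m (c *: (1%:M - S) + L *m S - L)^T)
  = c ^+ 2 * \tr ((1%:M - S) *m (1%:M - S)^T) + \tr ((L *m S - L) *m (L *m S - L)^T).
Proof.
move=> ST SS PL; set P := 1%:M - S.
have PT : P^T = P by rewrite /P linearB /= trmx1 ST.
have PP : P *m P = P by rewrite /P mulmxBl mul1mx mulmxBr mulmx1 SS subrr subr0.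
rewrite -addrA; apply: tr_expand.
have -> : L *m S - L = - (L *m P) by rewrite /P mulmxBr mulmx1 opprB.
rewrite linearN /= mulmxN raddfN trmx_mul PT mulmxA PP.
change (- \tr (P *m L^T) = 0).
by rewrite -mxtrace_tr trmx_mul trmxK PT mxtrace_mulC PL linear0 oppr0.
Qed.

Lemma tr_sq (m : nat) (X : 'M[R]_(m, n)) :
  \tr (X *m X^T) = \sum_i \sum_j X i j ^+ 2.
Proof.
rewrite /mxtrace; apply: eq_bigr => i _; rewrite mxE; apply: eq_bigr => j _.
by rewrite mxE expr2.
Qed.

Lemma tr_sq_ge0 (m : nat) (X : 'M[R]_(m, n)) : 0 <= \tr (X *m X^T).
Proof. by rewrite tr_sq; apply: sumr_ge0 => i _; apply: sumr_ge0 => j _; apply: sqr_ge0. Qed.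

Lemma tr_sq_gt0 (m : nat) (X : 'M[R]_(m, n)) : X != 0 -> 0 < \tr (X *m X^T).
Proof.
move=> Xn0; rewrite lt_def tr_sq_ge0 andbT tr_sq.
apply: contra Xn0 => /eqP.
have H0 : forall i, true -> 0 <= \sum_j X i j ^+ 2.
  by move=> i _; apply: sumr_ge0 => j _; apply: sqr_ge0.
move/(psumr_eq0P H0) => H; apply/eqP/matrixP => i j; rewrite mxE.
have := H i isT; move/(psumr_eq0P (fun k _ => sqr_ge0 (X i k))).
by move=> /(_ j isT) /eqP; rewrite sqrf_eq0 => /eqP.
Qed.
End R4.
Unset Implicit Arguments.
Local Open Scope classical_set_scope.
Theorem proposition2 (R : realType) (n : nat) (A S : 'M[R]_n) :
  (forall i j, 0 <= A i j) ->
  (1 < mup 0 (char_poly (laplacian A)))%N ->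
  is_orth_proj S (range_plus_ones (laplacian A)) ->
  let L := laplacian A in
  let f := fun tau : R => frob_norm (Ltilde L S tau - L) in
  (forall t1 t2 : R, 0 < t1 -> t1 < t2 -> f t2 < f t1) /\
  inf [set f tau | tau in [set t : R | 0 < t]] = frob_norm (L *m S - L) /\
  (0 < max_offdiag_rowsum A ->
     forall tau : R, 0 < tau -> tau <= (max_offdiag_rowsum A)^-1 ->
       f ((max_offdiag_rowsum A)^-1) <= f tau).
Proof.
move=> _ hm [ST [SS SU]] L f.
have L1 := laplacian1 A.
have dK := det_K0 L1 hm.
have Sn1 := S_neq1 L1 dK SU.
set P := 1%:M - S.
have Pn0 : P != 0 by rewrite /P subr_eq0 eq_sym.
have PL : P *m L = 0.
  have : (L^T <= S)%MS.
    case/andP: SU => _; rewrite /range_plus_ones col_mx_sub.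
    by case/andP.
  case/submxP => D HD.
  have -> : L = S *m D^T by rewrite -[L]trmxK HD trmx_mul ST.
  by rewrite mulmxA /P mulmxBl mul1mx SS subrr mul0mx.
set a := \tr (P *m P^T).
set b := \tr ((L *m S - L) *m (L *m S - L)^T).
have a0 : 0 < a by apply: tr_sq_gt0.
have b0 : 0 <= b by apply: tr_sq_ge0.
have hf : forall tau, f tau = Num.sqrt (tau^-1 ^+ 2 * a + b).
  by move=> tau; rewrite /f /frob_norm /Ltilde frob_formula.
have hb : frob_norm (L *m S - L) = Num.sqrt b by [].
have mono : forall t1 t2 : R, 0 < t1 -> t1 < t2 -> f t2 < f t1.
  move=> t1 t2 t10 t12; rewrite !hf ltr_sqrt; last first.
    by apply: ltr_wpDr => //; apply: mulr_gt0 => //; rewrite exprn_gt0 // invr_gt0.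
  have u0 : 0 < t2^-1 by rewrite invr_gt0 (lt_trans t10).
  have uv : t2^-1 < t1^-1 by rewrite ltf_pV2 // posrE ?(lt_trans t10).
  rewrite ltrD2r; move: u0 uv; set u := t2^-1; set v := t1^-1 => u0 uv; rewrite ltr_pM2r // !expr2; nra.
split; first exact: mono.
split; last first.
  move=> m0 tau tau0 le_tau; rewrite le_eqVlt in le_tau.
  case/orP: le_tau => [/eqP -> //| lt_tau].
  by apply/ltW/mono.
rewrite hb; apply/eqP; rewrite eq_le; apply/andP; split; last first.
  apply: lb_le_inf; first by exists (f 1), 1 => //=; rewrite ltr01.
  move=> _ [tau tau0 <-]; rewrite hf ler_sqrt; first by rewrite lerDr mulr_ge0 // ?sqr_ge0 ?ltW.
  by rewrite addr_ge0 // mulr_ge0 // ?sqr_ge0 ?ltW.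
rewrite leNgt; apply/negP => lt_inf.
set E := [set f tau | tau in [set t : R | 0 < t]] in lt_inf.
set eps := inf E - Num.sqrt b.
have eps0 : 0 < eps by rewrite subr_gt0.
have sa0 : 0 <= Num.sqrt a := sqrtr_ge0 a.
set c := eps / (Num.sqrt a + 1).
have c0 : 0 < c by rewrite divr_gt0 // ltr_wpDl.
have hca : c * Num.sqrt a < eps.
  rewrite /c mulrAC ltr_pdivrMr ?ltr_wpDl //.
  by rewrite ltr_pM2l // ltrDl.
have Ec : E (f c^-1) by exists c^-1 => //=; rewrite invr_gt0.
have lbE : has_lbound E by exists 0 => _ [tau _ <-]; rewrite hf sqrtr_ge0.
have := ge_inf lbE Ec; apply/negP; rewrite -ltNge.
rewrite hf invrK -[X in _ < X](subrK (Num.sqrt b)) -/eps.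
have sb0 := sqrtr_ge0 b.
have epsb : 0 <= eps + Num.sqrt b by rewrite addr_ge0 // ltW.
rewrite -[X in _ < X]ger0_norm //.
rewrite -sqrtr_sqr ltr_sqrt; last by rewrite exprn_gt0 // ltr_wpDr.
have h2 : c ^+ 2 * a = (c * Num.sqrt a) ^+ 2.
  by rewrite [RHS]exprMn sqr_sqrtr // ltW.
rewrite h2 -{1}(sqr_sqrtr b0).
have hpos : 0 <= c * Num.sqrt a by rewrite mulr_ge0 // ltW.
move: hca hpos sb0 eps0; set x := c * Num.sqrt a; set y := Num.sqrt b => hca hpos sb0 eps0.
rewrite !expr2; nra.
Qed.
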